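(* There is no set of first-order sentences in the signature consisting of a single binary relation symbol $\leq$ whose models are exactly the $\downarrow$-posets. In other words, the class of $\downarrow$-posets is not first-order axiomatizable in the language of posets.
   Context: A semilattice with identity is a set $S$ with a binary operation (written concatenatively) and an element $1\in S$ such that for all $s,t,u\in S$: $ss=s$, $st=ts$, $(st)u=s(tu)$, and $1s=s$. An action of such an $S$ on a set $C$ is a function $C\times S\to C$, $(c,s)\mapsto cs$, such that $c(st)=(cs)t$ and $c1=c$ for all $c\in C$, $s,t\in S$. Given such an action, define $c\leq d$ on $C$ iff there is $s\in S$ with $ds=c$; this is a partial order. A poset is called a $\downarrow$-poset if it is isomorphic to a poset arising in this way from some action of some semilattice with identity on some set. *)

(* Defs.v *)
From Stdlib Require Import Arith.

(* Formulas; variables are de Bruijn indices. *)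
Inductive formula : Type :=
| FRel : nat -> nat -> formula
| FEq : nat -> nat -> formula
| FFalse : formula
| FNot : formula -> formula
| FAnd : formula -> formula -> formula
| FOr : formula -> formula -> formula
| FImp : formula -> formula -> formula
| FAll : formula -> formula
| FEx : formula -> formula.

Fixpoint bounded (n : nat) (phi : formula) : Prop :=
  match phi with
  | FRel i j | FEq i j => i < n /\ j < n
  | FFalse => True
  | FNot p => bounded n p
  | FAnd p q | FOr p q | FImp p q => bounded n p /\ bounded n q
  | FAll p | FEx p => bounded (S n) p
  end.

Definition sentence (phi : formula) : Prop := bounded 0 phi.

Definition scons {M : Type} (a : M) (rho : nat -> M) : nat -> M :=
  fun n => match n with 0 => a | S k => rho k end.

Fixpoint sat {M : Type} (R : M -> M -> Prop) (rho : nat -> M) (phi : formula)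
  : Prop :=
  match phi with
  | FRel i j => R (rho i) (rho j)
  | FEq i j => rho i = rho j
  | FFalse => False
  | FNot p => ~ sat R rho p
  | FAnd p q => sat R rho p /\ sat R rho q
  | FOr p q => sat R rho p \/ sat R rho q
  | FImp p q => sat R rho p -> sat R rho q
  | FAll p => forall a : M, sat R (scons a rho) p
  | FEx p => exists a : M, sat R (scons a rho) p
  end.

Definition models {M : Type} (R : M -> M -> Prop) (T : formula -> Prop) : Prop :=
  forall phi, T phi -> forall rho : nat -> M, sat R rho phi.

Definition semilattice_with_identity {S : Type} (op : S -> S -> S) (one : S)
  : Prop :=
  (forall s, op s s = s) /\
  (forall s t, op s t = op t s) /\
  (forall s t u, op (op s t) u = op s (op t u)) /\
  (forall s, op one s = s).

Definition is_action {S C : Type} (op : S -> S -> S) (one : S)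
  (act : C -> S -> C) : Prop :=
  (forall c s t, act c (op s t) = act (act c s) t) /\
  (forall c, act c one = c).

Definition action_le {S C : Type} (act : C -> S -> C) (c d : C) : Prop :=
  exists s : S, act d s = c.

Definition down_poset {P : Type} (le : P -> P -> Prop) : Prop :=
  exists (S C : Type) (op : S -> S -> S) (one : S) (act : C -> S -> C),
    semilattice_with_identity op one /\ is_action op one act /\
    exists (f : P -> C) (g : C -> P),
      (forall x, g (f x) = x) /\ (forall c, f (g c) = c) /\
      (forall x y, le x y <-> action_le act (f x) (f y)).

(* Main.v *)
Require Import Defs.
From Stdlib Require Import ZArith Lia Classical FunctionalExtensionality PropExtensionality ProofIrrelevance ClassicalEpsilon.


Record DO := mkDO {
  car : Type;
  le : car -> car -> Prop;
  sh : car -> Z -> car;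
  zero : car;
  le_refl : forall a, le a a;
  le_trans : forall a b c, le a b -> le b c -> le a c;
  le_antisym : forall a b, le a b -> le b a -> a = b;
  le_total : forall a b, le a b \/ le b a;
  sh0 : forall a, sh a 0 = a;
  shsh : forall a t u, sh (sh a t) u = sh a (t+u);
  le_sh : forall a t u, le (sh a t) (sh a u) <-> (t <= u)%Z;
  sh_mono : forall a b t, le a b -> le (sh a t) (sh b t);
  disc : forall a b t, le a b -> le b (sh a t) -> exists w, (0 <= w <= t)%Z /\ b = sh a w }.

Arguments le {d}. Arguments sh {d}. Arguments zero {d}.

Section Basic.
Variable O : DO.
Lemma sh_inj (a : car O) t u : sh a t = sh a u -> t = u.
Proof. intro H. assert (le (sh a t) (sh a u)) by (rewrite H; apply le_refl).
 assert (le (sh a u) (sh a t)) by (rewrite H; apply le_refl).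
 apply le_sh in H0. apply le_sh in H1. lia. Qed.
Lemma sh_back (a : car O) t : sh (sh a t) (-t) = a.
Proof. rewrite shsh. replace (t + - t)%Z with 0%Z by lia. apply sh0. Qed.
Lemma eq_sh_sym (a b : car O) t : b = sh a t <-> a = sh b (-t).
Proof. split; intro H; subst. - now rewrite sh_back. - rewrite shsh. replace (-t + t)%Z with 0%Z by lia. now rewrite sh0. Qed.
Lemma sh_eq_sh (a c : car O) t s : sh a t = sh c s <-> c = sh a (t - s).
Proof. split; intro H.
 - assert (E: sh (sh a t) (-s) = sh (sh c s) (-s)) by now rewrite H.
   rewrite sh_back in E. rewrite <- E, shsh. f_equal; lia.
 - subst. rewrite shsh. f_equal; lia. Qed.
Lemma le_sh_pos (a : car O) t : (0 <= t)%Z -> le a (sh a t).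
Proof. intro. rewrite <- (sh0 O a) at 1. apply le_sh. lia. Qed.
Lemma le_sh_neg (a : car O) t : (t <= 0)%Z -> le (sh a t) a.
Proof. intro. rewrite <- (sh0 O a) at 2. apply le_sh. lia. Qed.
Lemma sh_self (a : car O) t : a = sh a t <-> t = 0%Z.
Proof. split; intro H. - rewrite <- (sh0 O a) in H at 1. apply sh_inj in H. lia. - subst; now rewrite sh0. Qed.
Lemma le_succ_iff (u v : car O) : le u (sh v 1) <-> le u v \/ u = sh v 1.
Proof. split.
 - intro H. destruct (le_total O u v) as [H1|H1]; [now left|].
   destruct (disc O v u 1 H1 H) as [w [Hw E]].
   assert (w = 0 \/ w = 1)%Z as [->| ->] by lia; [left; rewrite E, sh0; apply le_refl| now right].
 - intros [H|H]. + eapply le_trans; [exact H| apply le_sh_pos; lia]. + subst; apply le_refl. Qed.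
Lemma far_le (x y : car O) T t : (forall w, (-T < w < T)%Z -> x <> sh y w) -> (-T < t < T)%Z ->
  (le x (sh y t) <-> le x y).
Proof. intros Hf Ht. split; intro H.
 - destruct (Z_lt_le_dec 0 t).
   + destruct (le_total O x y) as [|H1]; auto.
     destruct (disc O y x t H1 H) as [w [Hw E]]. exfalso; apply (Hf w); auto; lia.
   + eapply le_trans; [exact H| apply le_sh_neg; lia].
 - destruct (Z_le_gt_dec 0 t).
   + eapply le_trans; [exact H| apply le_sh_pos; lia].
   + destruct (le_total O x (sh y t)) as [|H1]; auto.
     assert (H2: le x (sh (sh y t) (-t))) by now rewrite sh_back.
     destruct (disc O _ x (-t) H1 H2) as [w [Hw E]]. rewrite shsh in E.
     exfalso; apply (Hf (t+w)%Z); auto; lia. Qed.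
End Basic.

Lemma le_rev_iff (O1 O2 : DO) (a1 b1 : car O1) (a2 b2 : car O2) :
  (b1 = a1 <-> b2 = a2) -> (le a1 b1 <-> le a2 b2) -> (le b1 a1 <-> le b2 a2).
Proof. intros He Hl.
 assert (forall (O : DO) (a b : car O), le b a <-> b = a \/ ~ le a b).
 { intros O a b; split.
   - intro H. destruct (classic (le a b)); [left; apply le_antisym; auto| now right].
   - intros [->|H]; [apply le_refl| destruct (le_total O a b); tauto]. }
 rewrite (H O1), (H O2). tauto. Qed.

Definition agree (O1 O2 : DO) (T : Z) (a1 b1 : car O1) (a2 b2 : car O2) : Prop :=
  (forall t, (-T < t < T)%Z -> (b1 = sh a1 t <-> b2 = sh a2 t)) /\ (le a1 b1 <-> le a2 b2).

Lemma agree_mono O1 O2 T T' a1 b1 a2 b2 : (T' <= T)%Z -> agree O1 O2 T a1 b1 a2 b2 -> agree O1 O2 T' a1 b1 a2 b2.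
Proof. intros H [H1 H2]; split; auto. intros; apply H1; lia. Qed.
Lemma agree_sym O1 O2 T a1 b1 a2 b2 : (0 < T)%Z -> agree O1 O2 T a1 b1 a2 b2 -> agree O1 O2 T b1 a1 b2 a2.
Proof. intros HT [H1 H2]; split.
 - intros t Ht. rewrite (eq_sh_sym O1 b1 a1), (eq_sh_sym O2 b2 a2). apply H1; lia.
 - apply le_rev_iff; auto. specialize (H1 0%Z ltac:(lia)). rewrite !sh0 in H1. exact H1. Qed.
Lemma agree_swap O1 O2 T a1 b1 a2 b2 : agree O1 O2 T a1 b1 a2 b2 -> agree O2 O1 T a2 b2 a1 b1.
Proof. intros [H1 H2]; split; [intros t Ht; symmetry; auto| tauto]. Qed.
Lemma agree_self O1 O2 T a b : agree O1 O2 T a a b b.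
Proof. split. - intros t _. rewrite !sh_self. tauto. - split; intros; apply le_refl. Qed.


Definition valid (k : nat) (u : option nat) : Prop :=
  match u with None => True | Some i => (i < k)%nat end.

Lemma valid_S k u : valid (S k) u -> valid k u \/ u = Some k.
Proof. destruct u; simpl; auto. intro; destruct (Nat.eq_dec n k); subst; auto. left; lia. Qed.

Lemma fin_max (O : DO) (k : nat) (p : option nat -> car O) (P : option nat -> Prop) :
  (exists u, valid k u /\ P u) ->
  exists m, valid k m /\ P m /\ forall u, valid k u -> P u -> le (p u) (p m).
Proof.
  induction k as [|k IH]; intros [u [Hu Pu]].
  - destruct u; simpl in Hu; [lia|]. exists None; repeat split; auto.
    intros [v|] Hv Pv; simpl in Hv; [lia| apply le_refl].
  - destruct (classic (exists u, valid k u /\ P u)) as [Hex|Hno].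
    + destruct (IH Hex) as [m [Hm [Pm Hmax]]].
      destruct (classic (P (Some k))) as [Pk|Pk].
      * destruct (le_total O (p m) (p (Some k))) as [Hl|Hl].
        -- exists (Some k); repeat split; simpl; auto.
           intros v Hv Pv. destruct (valid_S _ _ Hv) as [Hv' | ->]; [eapply le_trans; eauto| apply le_refl].
        -- exists m; repeat split; auto. destruct m; simpl in *; auto.
           intros v Hv Pv. destruct (valid_S _ _ Hv) as [Hv' | ->]; auto.
      * exists m; repeat split; auto. destruct m; simpl in *; auto.
        intros v Hv Pv. destruct (valid_S _ _ Hv) as [Hv' | ->]; auto. contradiction.
    + destruct (valid_S _ _ Hu) as [Hu' | ->]; [exfalso; eauto|].
      exists (Some k); repeat split; simpl; auto.
      intros v Hv Pv. destruct (valid_S _ _ Hv) as [Hv' | ->]; [exfalso; eauto| apply le_refl].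
Qed.

Section Forth.
Variables O1 O2 : DO.

Lemma forth_core (k : nat) (p : option nat -> car O1) (q : option nat -> car O2) (T' : Z) :
  (0 < T')%Z ->
  (forall u v, valid k u -> valid k v -> agree O1 O2 (2*T') (p u) (p v) (q u) (q v)) ->
  forall a, (exists u, valid k u /\ le (p u) a) ->
  exists b, forall v, valid k v -> agree O1 O2 T' (p v) a (q v) b.
Proof.
  intros HT HA a HLo.
  destruct (classic (exists u t, valid k u /\ (-T' < t < T')%Z /\ a = sh (p u) t))
    as [[u [t [Hu [Ht Ha]]]] | Hfar].
  - exists (sh (q u) t). intros v Hv. destruct (HA u v Hu Hv) as [A1 A2]. split.
    + intros s Hs. rewrite Ha. rewrite !sh_eq_sh. apply A1; lia.
    + rewrite Ha. destruct (classic (exists w, (-(2*T') < w < 2*T')%Z /\ p v = sh (p u) w)) as [[w [Hw Hpv]] | Hno].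
      * assert (Hqv : q v = sh (q u) w) by (apply A1; auto).
        rewrite Hpv, Hqv, !le_sh. tauto.
      * assert (Hnoq : forall w, (-(2*T') < w < 2*T')%Z -> q v <> sh (q u) w).
        { intros w Hw E. apply Hno. exists w; split; auto. apply A1; auto. }
        rewrite (far_le O1 (p v) (p u) (2*T') t) by first [lia | (intros w Hw E; apply Hno; eauto)].
        rewrite (far_le O2 (q v) (q u) (2*T') t) by first [lia | exact Hnoq].
        destruct (agree_sym O1 O2 (2*T') _ _ _ _ ltac:(lia) (HA u v Hu Hv)). tauto.
  - assert (Hf : forall u t, valid k u -> (-T' < t < T')%Z -> a <> sh (p u) t).
    { intros u t Hu Ht E. apply Hfar; eauto. }
    clear Hfar.
    destruct (fin_max O1 k p (fun u => le (p u) a) HLo) as [ulo [Hulo [Hloa Hmax]]].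
    exists (sh (q ulo) T'). intros v Hv.
    destruct (classic (le (p v) a)) as [Hva|Hva].
    + assert (Hvlo : le (p v) (p ulo)) by auto.
      assert (Hqvlo : le (q v) (q ulo)) by (apply (HA v ulo Hv Hulo); auto).
      assert (Hb : le (sh (q v) T') (sh (q ulo) T')) by (apply sh_mono; auto).
      split.
      * intros s Hs. split; intro E; exfalso.
        -- apply (Hf v s); auto.
        -- rewrite E in Hb. apply le_sh in Hb. lia.
      * split; intros _; auto. eapply le_trans; [exact Hqvlo| apply le_sh_pos; lia].
    + assert (Hav : le a (p v)) by (destruct (le_total O1 a (p v)); tauto).
      assert (Hlov : le (p ulo) (p v)) by (eapply le_trans; eauto).
      assert (Hno : forall w, (-(2*T') < w < 2*T')%Z -> p v <> sh (p ulo) w).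
      { intros w Hw E.
        assert (H2: le a (sh (p ulo) w)) by (rewrite <- E; auto).
        destruct (disc O1 _ _ _ Hloa H2) as [w' [Hw' Ea]].
        destruct (Z_lt_le_dec w' T'). { apply (Hf ulo w'); auto; lia. }
        assert (Ea' : a = sh (p v) (w' - w)).
        { rewrite E, shsh. rewrite Ea. f_equal; lia. }
        destruct (Z_lt_le_dec (-T') (w' - w)).
        - apply (Hf v (w'-w)%Z); auto; lia.
        - lia. }
      assert (Hnoq : forall w, (-(2*T') < w < 2*T')%Z -> q v <> sh (q ulo) w).
      { intros w Hw E. apply (Hno w Hw). apply (HA ulo v Hulo Hv); auto. }
      assert (Hqlov : le (q ulo) (q v)) by (apply (HA ulo v Hulo Hv); auto).
      assert (Hfarq : le (sh (q ulo) (2*T')) (q v)).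
      { destruct (le_total O2 (sh (q ulo) (2*T')) (q v)) as [|H1]; auto.
        destruct (disc O2 _ _ _ Hqlov H1) as [w [Hw E]].
        destruct (Z.eq_dec w (2*T')) as [-> | Hne].
        - rewrite E; apply le_refl.
        - exfalso; apply (Hnoq w); auto; lia. }
      split.
      * intros s Hs. split; intro E; exfalso.
        -- apply (Hf v s); auto.
        -- apply sh_eq_sh in E. apply (Hnoq (T' - s)%Z); auto; lia.
      * split; intro H; [contradiction| exfalso].
        assert (H3 : le (sh (q ulo) (2*T')) (sh (q ulo) T')) by (eapply le_trans; eauto).
        apply le_sh in H3. lia.
Qed.
End Forth.

Definition rev (O : DO) : DO.
Proof.
  refine (mkDO (car O) (fun a b => le b a) (fun a t => sh a (-t)) zero _ _ _ _ _ _ _ _ _).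
  - intros; apply le_refl.
  - intros a b c H1 H2; eapply le_trans; eauto.
  - intros; apply le_antisym; auto.
  - intros a b; destruct (le_total O a b); auto.
  - intros a; simpl. replace (-0)%Z with 0%Z by lia. apply sh0.
  - intros a t u. rewrite shsh. f_equal; lia.
  - intros a t u. rewrite le_sh. lia.
  - intros a b t H. apply sh_mono; auto.
  - intros a b t H1 H2.
    assert (H3: le b (sh (sh a (-t)) t)) by (rewrite shsh; replace (-t+t)%Z with 0%Z by lia; rewrite sh0; auto).
    destruct (disc O _ _ _ H2 H3) as [w [Hw E]]. exists (t - w)%Z; split; [lia|].
    rewrite E, shsh. f_equal; lia.
Defined.

Lemma agree_rev O1 O2 T a1 b1 a2 b2 : (0 < T)%Z ->
  agree O1 O2 T a1 b1 a2 b2 -> agree (rev O1) (rev O2) T a1 b1 a2 b2.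
Proof. intros HT [H1 H2]; split; simpl.
 - intros t Ht. apply H1; lia.
 - apply le_rev_iff; auto. specialize (H1 0%Z ltac:(lia)). rewrite !sh0 in H1. exact H1. Qed.

Lemma agree_unrev O1 O2 T a1 b1 a2 b2 : (0 < T)%Z ->
  agree (rev O1) (rev O2) T a1 b1 a2 b2 -> agree O1 O2 T a1 b1 a2 b2.
Proof. intros HT [H1 H2]; simpl in *; split.
 - intros t Ht. specialize (H1 (-t)%Z ltac:(lia)). rewrite Z.opp_involutive in H1. exact H1.
 - apply le_rev_iff; auto. specialize (H1 0%Z ltac:(lia)). simpl in H1. rewrite !sh0 in H1.
   split; intro E; symmetry; apply H1; auto. Qed.

Lemma forth_idx O1 O2 (k : nat) (p : option nat -> car O1) (q : option nat -> car O2) (T' : Z) :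
  (0 < T')%Z ->
  (forall u v, valid k u -> valid k v -> agree O1 O2 (2*T') (p u) (p v) (q u) (q v)) ->
  forall a, exists b, forall v, valid k v -> agree O1 O2 T' (p v) a (q v) b.
Proof.
  intros HT HA a.
  destruct (classic (exists u, valid k u /\ le (p u) a)) as [Hlo|Hno].
  - eapply forth_core; eauto.
  - destruct (forth_core (rev O1) (rev O2) k p q T' HT) with (a := a) as [b Hb].
    + intros u v Hu Hv. apply agree_rev; [lia| auto].
    + exists None; split; simpl; auto. destruct (le_total O1 (p None) a); auto.
      exfalso; apply Hno; exists None; simpl; auto.
    + exists b. intros v Hv. apply agree_unrev; auto.
Qed.


Inductive el (I : Type) : Type :=
| Bot | Dd | Cc | Ee | Ww | X (i : I) | Y (i : I) | Sg (i : I).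
Arguments Bot {I}. Arguments Dd {I}. Arguments Cc {I}. Arguments Ee {I}. Arguments Ww {I}.
Arguments X {I}. Arguments Y {I}. Arguments Sg {I}.

Definition RP (O : DO) (a b : el (car O)) : Prop :=
  match a, b with
  | Bot, _ => True
  | Dd, Dd | Dd, Cc => True
  | Cc, Cc => True
  | Ee, Ee | Ee, Cc | Ee, Ww => True
  | Ww, Ww => True
  | X i, Dd | X i, Cc => i = zero
  | X i, X j => i = j
  | X i, Sg j => i = j \/ i = sh j 1
  | Y i, Dd | Y i, Cc => le i zero
  | Y i, Ww => True
  | Y i, Y j => le i j
  | Y i, Sg j => le i (sh j 1)
  | Sg i, Sg j => i = j
  | _, _ => False
  end.

Definition idx (O : DO) (e : el (car O)) : car O :=
  match e with X i | Y i | Sg i => i | _ => zero end.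
Definition tag {I} (e : el I) : nat :=
  match e with Bot => 0 | Dd => 1 | Cc => 2 | Ee => 3 | Ww => 4 | X _ => 5 | Y _ => 6 | Sg _ => 7 end%nat.
Definition retag {I J} (e : el I) (b : J) : el J :=
  match e with Bot => Bot | Dd => Dd | Cc => Cc | Ee => Ee | Ww => Ww | X _ => X b | Y _ => Y b | Sg _ => Sg b end.

Lemma el_eq_iff O (e f : el (car O)) : e = f <-> tag e = tag f /\ idx O e = idx O f.
Proof. destruct e, f; simpl; split; intro H; try discriminate; try (destruct H; discriminate);
  try (injection H; intros; subst); try (destruct H as [_ H']; subst); auto. Qed.

Definition pt (O : DO) (rho : nat -> el (car O)) (u : option nat) : car O :=
  match u with None => zero | Some i => idx O (rho i) end.

Definition TT (n : nat) : Z := (2 ^ (Z.of_nat n + 1))%Z.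
Lemma TT_S n : TT (S n) = (2 * TT n)%Z.
Proof. unfold TT. rewrite Nat2Z.inj_succ. unfold Z.succ.
  replace (Z.of_nat n + 1 + 1)%Z with (Z.succ (Z.of_nat n + 1)) by lia. rewrite Z.pow_succ_r; lia. Qed.
Lemma TT_ge2 n : (2 <= TT n)%Z.
Proof. induction n. - unfold TT; simpl; lia. - rewrite TT_S; lia. Qed.
Lemma TT_mono m n : (m <= n)%nat -> (TT m <= TT n)%Z.
Proof. induction 1; auto. lia. rewrite TT_S. pose proof (TT_ge2 m0). lia. Qed.

Definition Inv (O1 O2 : DO) (n k : nat) (r1 : nat -> el (car O1)) (r2 : nat -> el (car O2)) : Prop :=
  (forall i, (i < k)%nat -> tag (r1 i) = tag (r2 i)) /\
  forall u v, valid k u -> valid k v -> agree O1 O2 (TT n) (pt O1 r1 u) (pt O1 r1 v) (pt O2 r2 u) (pt O2 r2 v).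

Lemma Inv_mono O1 O2 m n k r1 r2 : (m <= n)%nat -> Inv O1 O2 n k r1 r2 -> Inv O1 O2 m k r1 r2.
Proof. intros Hmn [H1 H2]; split; auto. intros; eapply agree_mono; [apply TT_mono; eauto| auto]. Qed.
Lemma Inv_sym O1 O2 n k r1 r2 : Inv O1 O2 n k r1 r2 -> Inv O2 O1 n k r2 r1.
Proof. intros [H1 H2]; split; [intros; symmetry; auto| intros; apply agree_swap; auto]. Qed.

Definition cls (u : option nat) : option (option nat) :=
  match u with None => Some None | Some 0 => None | Some (Datatypes.S i) => Some (Some i) end.

Lemma pt_scons O e r u : pt O (scons e r) u = match cls u with None => idx O e | Some u' => pt O r u' end.
Proof. destruct u as [[|i]|]; reflexivity. Qed.
Lemma valid_cls k u : valid (Datatypes.S k) u -> match cls u with None => True | Some u' => valid k u' end.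
Proof. destruct u as [[|i]|]; simpl; auto; lia. Qed.

Lemma Inv_step O1 O2 n k r1 r2 : Inv O1 O2 (Datatypes.S n) k r1 r2 ->
  forall e1, exists e2, Inv O1 O2 n (Datatypes.S k) (scons e1 r1) (scons e2 r2).
Proof.
  intros [Htag HA] e1.
  assert (HA' : forall u v, valid k u -> valid k v ->
     agree O1 O2 (2 * TT n) (pt O1 r1 u) (pt O1 r1 v) (pt O2 r2 u) (pt O2 r2 v)).
  { intros; rewrite <- TT_S; auto. }
  pose proof (TT_ge2 n) as HT.
  destruct (forth_idx O1 O2 k (pt O1 r1) (pt O2 r2) (TT n) ltac:(lia) HA' (idx O1 e1)) as [b Hb].
  assert (Hidx : idx O2 (retag e1 b) = b).
  { assert (Hz : idx O1 e1 = zero -> b = zero).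
    { intro E. destruct (Hb None I) as [H1 _]. simpl in H1.
      specialize (H1 0%Z ltac:(lia)). rewrite !sh0 in H1. apply H1; auto. }
    destruct e1; simpl; auto; symmetry; apply Hz; reflexivity. }
  exists (retag e1 b). split.
  - intros [|i] Hi; simpl; [destruct e1; reflexivity| apply Htag; lia].
  - intros u v Hu Hv. rewrite !pt_scons. rewrite Hidx.
    apply valid_cls in Hu, Hv.
    destruct (cls u) as [u'|], (cls v) as [v'|].
    + eapply agree_mono; [| apply HA; auto]. rewrite TT_S; lia.
    + apply Hb; auto.
    + apply agree_sym; [lia| apply Hb; auto].
    + apply agree_self.
Qed.

Lemma atomic_el O1 O2 T (HT : (2 <= T)%Z) (e1 f1 : el (car O1)) (e2 f2 : el (car O2)) :
  tag e1 = tag e2 -> tag f1 = tag f2 ->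
  agree O1 O2 T (idx O1 f1) (idx O1 e1) (idx O2 f2) (idx O2 e2) ->
  agree O1 O2 T (idx O1 e1) (idx O1 f1) (idx O2 e2) (idx O2 f2) ->
  agree O1 O2 T zero (idx O1 e1) zero (idx O2 e2) ->
  agree O1 O2 T (idx O1 e1) zero (idx O2 e2) zero ->
  (RP O1 e1 f1 <-> RP O2 e2 f2) /\ (e1 = f1 <-> e2 = f2).
Proof.
  intros Te Tf [A1 _] [_ D] [C1 _] [_ E].
  pose proof (A1 0%Z ltac:(lia)) as A. rewrite !sh0 in A.
  pose proof (A1 1%Z ltac:(lia)) as B.
  pose proof (C1 0%Z ltac:(lia)) as C. rewrite !sh0 in C.
  assert (F : le (idx O1 e1) (sh (idx O1 f1) 1) <-> le (idx O2 e2) (sh (idx O2 f2) 1)).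
  { rewrite !le_succ_iff. tauto. }
  split.
  - destruct e1, e2; simpl in Te; try discriminate; destruct f1, f2; simpl in Tf; try discriminate;
    simpl in *; try tauto.
  - rewrite !el_eq_iff. rewrite Te, Tf. tauto.
Qed.

Lemma atomic O1 O2 n k r1 r2 i j : Inv O1 O2 n k r1 r2 -> (i < k)%nat -> (j < k)%nat ->
  (RP O1 (r1 i) (r1 j) <-> RP O2 (r2 i) (r2 j)) /\ (r1 i = r1 j <-> r2 i = r2 j).
Proof.
  intros [Ht HA] Hi Hj.
  apply atomic_el with (T := TT n); auto using TT_ge2.
  - apply (HA (Some j) (Some i)); simpl; auto.
  - apply (HA (Some i) (Some j)); simpl; auto.
  - apply (HA None (Some i)); simpl; auto.
  - apply (HA (Some i) None); simpl; auto.
Qed.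

Fixpoint depth (f : formula) : nat :=
  match f with
  | FRel _ _ | FEq _ _ | FFalse => 0
  | FNot p => depth p
  | FAnd p q | FOr p q | FImp p q => Nat.max (depth p) (depth q)
  | FAll p | FEx p => Datatypes.S (depth p)
  end.

Lemma ef O1 O2 phi : forall n k r1 r2, (depth phi <= n)%nat -> bounded k phi ->
  Inv O1 O2 n k r1 r2 -> (sat (RP O1) r1 phi <-> sat (RP O2) r2 phi).
Proof.
  induction phi; intros nn k r1 r2 Hd Hb HI; simpl in *.
  - destruct Hb; apply (atomic O1 O2 nn k r1 r2); auto.
  - destruct Hb; apply (atomic O1 O2 nn k r1 r2); auto.
  - tauto.
  - rewrite (IHphi nn k r1 r2); tauto.
  - destruct Hb. rewrite (IHphi1 nn k r1 r2), (IHphi2 nn k r1 r2) by (auto; lia). tauto.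
  - destruct Hb. rewrite (IHphi1 nn k r1 r2), (IHphi2 nn k r1 r2) by (auto; lia). tauto.
  - destruct Hb. rewrite (IHphi1 nn k r1 r2), (IHphi2 nn k r1 r2) by (auto; lia). tauto.
  - destruct nn as [|nn]; [lia|]. split; intros H a.
    + destruct (Inv_step O2 O1 nn k r2 r1 (Inv_sym _ _ _ _ _ _ HI) a) as [a1 H1].
      apply (IHphi nn (Datatypes.S k) (scons a1 r1) (scons a r2)); auto; [lia| apply Inv_sym; auto].
    + destruct (Inv_step O1 O2 nn k r1 r2 HI a) as [a2 H2].
      apply (IHphi nn (Datatypes.S k) (scons a r1) (scons a2 r2)); auto; lia.
  - destruct nn as [|nn]; [lia|]. split; intros [a H].
    + destruct (Inv_step O1 O2 nn k r1 r2 HI a) as [a2 H2]. exists a2.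
      apply (IHphi nn (Datatypes.S k) (scons a r1) (scons a2 r2)); auto; lia.
    + destruct (Inv_step O2 O1 nn k r2 r1 (Inv_sym _ _ _ _ _ _ HI) a) as [a1 H1]. exists a1.
      apply (IHphi nn (Datatypes.S k) (scons a1 r1) (scons a r2)); auto; [lia| apply Inv_sym; auto].
Qed.

Lemma ef_sentence O1 O2 phi r1 r2 : sentence phi -> (sat (RP O1) r1 phi <-> sat (RP O2) r2 phi).
Proof.
  intro Hs. apply (ef O1 O2 phi (depth phi) 0); auto.
  split; [intros; lia|]. intros u v Hu Hv. destruct u, v; simpl in *; try lia. apply agree_self.
Qed.


Definition LPD {M} (R : M -> M -> Prop) (F : M -> Prop) : Prop :=
  (forall x y, R x y -> F y -> F x) /\
  (forall y, exists m, F m /\ R m y /\ forall z, F z -> R z y -> R z m).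

Section DP.
Variable M : Type.
Variable RR : M -> M -> Prop.
Hypothesis Hrefl : forall x, RR x x.
Hypothesis Htrans : forall x y z, RR x y -> RR y z -> RR x z.
Hypothesis Hanti : forall x y, RR x y -> RR y x -> x = y.

Definition SS := {F : M -> Prop | LPD RR F}.

Lemma LPD_all : LPD RR (fun _ => True).
Proof. split; auto. intro y; exists y; auto. Qed.

Lemma LPD_inter F G : LPD RR F -> LPD RR G -> LPD RR (fun x => F x /\ G x).
Proof. intros [F1 F2] [G1 G2]; split.
 - intros x y H [H1 H2]; split; eauto.
 - intro y. destruct (F2 y) as [m1 [Fm1 [Rm1 Hm1]]]. destruct (G2 m1) as [m2 [Gm2 [Rm2 Hm2]]].
   exists m2; repeat split; eauto. intros z [Fz Gz] Rz. apply Hm2; auto. Qed.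

Definition opS (F G : SS) : SS := exist _ _ (LPD_inter _ _ (proj2_sig F) (proj2_sig G)).
Definition oneS : SS := exist _ _ LPD_all.
Definition actS (y : M) (F : SS) : M :=
  proj1_sig (constructive_indefinite_description _ (proj2 (proj2_sig F) y)).
Lemma actS_spec y F : proj1_sig F (actS y F) /\ RR (actS y F) y /\
  forall z, proj1_sig F z -> RR z y -> RR z (actS y F).
Proof. unfold actS. destruct (constructive_indefinite_description _ _) as [m Hm]. exact Hm. Qed.

Lemma SS_ext (F G : SS) : (forall x, proj1_sig F x <-> proj1_sig G x) -> F = G.
Proof. destruct F as [F HF], G as [G HG]; simpl; intro H.
  assert (F = G) by (extensionality x; apply propositional_extensionality; auto).
  subst. f_equal. apply proof_irrelevance. Qed.

Lemma down_poset_of :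
  (forall c d, RR d c -> exists F, LPD RR F /\ F d /\ forall z, F z -> RR z c -> RR z d) ->
  down_poset RR.
Proof.
  intro Hmain.
  exists SS, M, opS, oneS, actS. split; [|split].
  - repeat split.
    + intro s; apply SS_ext; simpl; tauto.
    + intros s t; apply SS_ext; simpl; tauto.
    + intros s t u; apply SS_ext; simpl; tauto.
    + intro s; apply SS_ext; simpl; tauto.
  - split.
    + intros c s t. apply Hanti.
      * destruct (actS_spec c (opS s t)) as [[Fs Ft] [R1 H1]].
        destruct (actS_spec c s) as [Fs' [R2 H2]].
        destruct (actS_spec (actS c s) t) as [Ft' [R3 H3]].
        apply H3; auto.
      * destruct (actS_spec c (opS s t)) as [_ [_ H1]].
        destruct (actS_spec c s) as [Fs' [R2 H2]].
        destruct (actS_spec (actS c s) t) as [Ft' [R3 H3]].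
        apply H1; simpl; [split|]; eauto.
        destruct (proj2_sig s) as [D _]. eapply D; eauto.
    + intro c. destruct (actS_spec c oneS) as [_ [H1 H2]]. apply Hanti; auto. apply H2; simpl; auto.
  - exists (fun x => x), (fun x => x). repeat split; auto.
    + intro H. destruct (Hmain _ _ H) as [F [HF [Fx Hx]]].
      exists (exist _ F HF). destruct (actS_spec y (exist _ F HF)) as [Fm [Rm Hm]]; simpl in *.
      apply Hanti; auto.
    + intros [s <-]. apply actS_spec.
Qed.
End DP.


Section Gen.
Variable O : DO.
Lemma R_refl (e : el (car O)) : RP O e e.
Proof. destruct e; simpl; auto using le_refl. Qed.
Lemma R_trans (a b c : el (car O)) : RP O a b -> RP O b c -> RP O a c.
Proof. destruct a, b, c; simpl; intuition; subst; eauto using le_trans. Qed.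
Lemma R_antisym (a b : el (car O)) : RP O a b -> RP O b a -> a = b.
Proof. destruct a, b; simpl; intuition; subst; auto; f_equal; auto using le_antisym. Qed.

Lemma principal_LPD (d : el (car O)) :
  (forall y, exists m, RP O m d /\ RP O m y /\ forall z, RP O z d -> RP O z y -> RP O z m) ->
  LPD (RP O) (fun z => RP O z d).
Proof. intro H; split; auto. intros x y H1 H2; eapply R_trans; eauto. Qed.

Lemma meet_ok (d : el (car O)) : match d with Bot | Ee | X _ | Y _ => True | _ => False end ->
  forall y, exists m, RP O m d /\ RP O m y /\ forall z, RP O z d -> RP O z y -> RP O z m.
Proof.
  intros Hd y. destruct (classic (RP O d y)) as [Hy|Hy].
  { exists d; repeat split; auto using R_refl. }
  destruct d; try contradiction; try (exfalso; apply Hy; exact I).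
  - exists Bot; repeat split; auto; intros z Hz1 Hz2; destruct z; simpl in *; auto; try contradiction;
    destruct y; simpl in *; auto.
  - exists Bot; repeat split; auto; intros z Hz1 Hz2; destruct z; simpl in *; auto; try contradiction;
    subst; contradiction.
  - destruct y; simpl in Hy.
    + exists Bot; repeat split; auto; intros z Hz1 Hz2; destruct z; simpl in *; auto.
    + exists (Y zero); simpl. repeat split; [destruct (le_total O i zero); tauto| apply le_refl|].
      intros z Hz1 Hz2; destruct z; simpl in *; auto.
    + exists (Y zero); simpl. repeat split; [destruct (le_total O i zero); tauto| apply le_refl|].
      intros z Hz1 Hz2; destruct z; simpl in *; auto.
    + exists Bot; repeat split; auto; intros z Hz1 Hz2; destruct z; simpl in *; auto.
    + exfalso; apply Hy; auto.
    + exists Bot; repeat split; auto; intros z Hz1 Hz2; destruct z; simpl in *; auto.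
    + exists (Y i0); simpl. repeat split; [destruct (le_total O i i0); tauto| apply le_refl|].
      intros z Hz1 Hz2; destruct z; simpl in *; auto.
    + exists (Y (sh i0 1)); simpl. repeat split; [destruct (le_total O i (sh i0 1)); tauto| apply le_refl|].
      intros z Hz1 Hz2; destruct z; simpl in *; auto.
Qed.
End Gen.

Definition OZ : DO.
Proof.
  refine (mkDO Z Z.le (fun a t => (a + t)%Z) 0%Z _ _ _ _ _ _ _ _ _); intros; try lia.
  exists (b - a)%Z; split; lia.
Defined.

Definition leZZ (a b : bool * Z) : Prop :=
  match a, b with
  | (false, _), (true, _) => True
  | (true, _), (false, _) => False
  | (_, x), (_, y) => (x <= y)%Z
  end.

Definition OZZ : DO.
Proof.
  refine (mkDO (bool * Z) leZZ (fun a t => (fst a, snd a + t)%Z) (false, 0%Z) _ _ _ _ _ _ _ _ _).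
  - intros [[|] x]; simpl; lia.
  - intros [[|] x] [[|] y] [[|] z]; simpl; auto; lia.
  - intros [[|] x] [[|] y]; simpl; intros; try contradiction; f_equal; lia.
  - intros [[|] x] [[|] y]; simpl; auto; lia.
  - intros [b x]; simpl; f_equal; lia.
  - intros [b x] t u; simpl; f_equal; lia.
  - intros [[|] x] t u; simpl; lia.
  - intros [[|] x] [[|] y] t; simpl; auto; lia.
  - intros [[|] x] [[|] y] t; simpl; intros H1 H2; try contradiction;
      exists (y - x)%Z; (split; [lia| f_equal; lia]).
Defined.


Lemma notdown2 : ~ down_poset (RP OZ).
Proof.
  intros (Sx & Cx & op & one & act & [Hid [Hcom [Hass Hone]]] & [Hact Hact1] & f & g & Hgf & Hfg & Hiso).
  set (dot := fun x s => g (act (f x) s)).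
  assert (dot_le : forall x s, RP OZ (dot x s) x).
  { intros x s. apply Hiso. exists s. unfold dot. now rewrite Hfg. }
  assert (le_dot : forall z x, RP OZ z x -> exists t, dot x t = z).
  { intros z x H. apply Hiso in H. destruct H as [t Ht]. exists t. unfold dot. now rewrite Ht, Hgf. }
  assert (dot_dot : forall x s t, dot (dot x s) t = dot x (op s t)).
  { intros. unfold dot. now rewrite Hfg, Hact. }
  destruct (le_dot Dd Cc I) as [s0 Hs0].
  set (Fix := fun z => dot z s0 = z).
  assert (Fix_down : forall z x, RP OZ z x -> Fix x -> Fix z).
  { intros z x H Fx. destruct (le_dot z x H) as [t <-]. unfold Fix in *.
    rewrite dot_dot, Hcom, <- dot_dot, Fx. reflexivity. }
  assert (Fix_dot : forall x, Fix (dot x s0)).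
  { intro x. unfold Fix. now rewrite dot_dot, Hid. }
  assert (Fix_max : forall z x, Fix z -> RP OZ z x -> RP OZ z (dot x s0)).
  { intros z x Fz H. destruct (le_dot z x H) as [t <-]. unfold Fix in Fz.
    rewrite <- Fz. rewrite dot_dot, Hcom, <- dot_dot. apply dot_le. }
  assert (FD : Fix Dd) by (rewrite <- Hs0; apply Fix_dot).
  assert (FE : ~ Fix Ee).
  { intro FE. pose proof (Fix_max Ee Cc FE I) as H. rewrite Hs0 in H. exact H. }
  assert (Hind : forall n : nat, Fix (X (Z.of_nat n)) /\ Fix (Y (Z.of_nat n))).
  { induction n as [|n [IHx IHy]].
    - split; apply (Fix_down _ Dd); simpl; auto; lia.
    - set (m := dot (Sg (Z.of_nat n)) s0).
      assert (H1 : RP OZ m (Sg (Z.of_nat n))) by apply dot_le.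
      assert (H2 : RP OZ (X (Z.of_nat n)) m) by (apply Fix_max; simpl; auto).
      assert (H3 : RP OZ (Y (Z.of_nat n)) m) by (apply Fix_max; simpl; auto; lia).
      assert (Hm : m = Sg (Z.of_nat n)).
      { destruct m; simpl in *; try contradiction; try (subst; contradiction). now subst. }
      assert (FS : Fix (Sg (Z.of_nat n))) by (rewrite <- Hm; apply Fix_dot).
      rewrite Nat2Z.inj_succ. split; apply (Fix_down _ (Sg (Z.of_nat n))); auto; simpl; unfold Z.succ; auto; lia. }
  set (m := dot Ww s0).
  assert (H1 : RP OZ m Ww) by apply dot_le.
  assert (H2 : forall n : nat, RP OZ (Y (Z.of_nat n)) m).
  { intro n. apply Fix_max; [apply Hind| simpl; auto]. }
  destruct m eqn:Em; simpl in *; try contradiction.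
  - exact (H2 0%nat).
  - exact (H2 0%nat).
  - apply FE. apply (Fix_down Ee Ww I). rewrite <- Em. apply Fix_dot.
  - specialize (H2 (Z.to_nat (i + 1))). lia.
Qed.


Definition Fsp (z : el (car OZZ)) : Prop :=
  match z with
  | Bot | Dd => True
  | X (b, _) | Sg (b, _) => b = false
  | Y i => leZZ i (true, 0%Z)
  | _ => False
  end.

Lemma Fsp_LPD : LPD (RP OZZ) Fsp.
Proof.
  split.
  - intros x y H Fy. destruct y as [| | | | |[b z]|[b z]|[b z]]; destruct x as [| | | | |[b' z']|[b' z']|[b' z']];
      simpl in *; try contradiction; auto;
      repeat match goal with H : (_, _) = (_, _) |- _ => injection H; intros; subst; clear H end;
      try (destruct H as [H|H]; injection H; intros; subst; auto);
      try (destruct b; destruct b'; simpl in *; auto; try discriminate; lia).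
      all: try reflexivity. all: destruct b'; simpl in *; auto; try lia.
  - intro y. destruct (classic (Fsp y)) as [Fy|Fy].
    { exists y; repeat split; auto using R_refl. }
    destruct y as [| | | | |[b z]|[b z]|[b z]]; simpl in Fy; try contradiction.
    + exists Dd; repeat split; simpl; auto. intros z Hz1 Hz2; destruct z; simpl in *; auto.
    + exists Bot; repeat split; simpl; auto. intros z Hz1 Hz2; destruct z; simpl in *; auto.
    + exists (Y (true, 0%Z)); repeat split; simpl; auto. lia.
      intros z Hz1 Hz2; destruct z; simpl in *; auto.
    + exists Bot; repeat split; simpl; auto. intros z0 Hz1 Hz2; destruct z0 as [| | | | |[b' z']|[b' z']|[b' z']];
        simpl in *; auto; try injection Hz2; intros; subst; contradiction.
    + destruct b; simpl in Fy; [|exfalso; auto].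
      exists (Y (true, 0%Z)); repeat split; simpl; try lia.
      intros z0 Hz1 Hz2; destruct z0; simpl in *; auto.
    + destruct b; [|exfalso; auto].
      exists (Y (true, Z.min (z+1) 0)); repeat split; simpl; auto; try lia.
      intros z0 Hz1 Hz2; destruct z0 as [| | | | |[b' z']|[b' z']|[b' z']]; simpl in *; auto;
        try (destruct Hz2 as [H|H]; injection H; intros; subst; discriminate);
        try (injection Hz2; intros; subst; discriminate).
      destruct b'; simpl in *; auto; lia.
Qed.

Lemma down1 : down_poset (RP OZZ).
Proof.
  apply down_poset_of; [apply R_refl| apply R_trans| apply R_antisym|].
  intros c d Hdc. destruct (classic (d = c)) as [ <- | Hne].
  { exists (fun _ => True); split; [apply LPD_all; apply R_refl| split; auto]. }
  destruct d.
  - exists (fun z => RP OZZ z Bot); split; [apply principal_LPD, meet_ok; exact I| split; auto using R_refl].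
  - destruct c; simpl in Hdc; try contradiction; try (exfalso; now apply Hne).
    exists Fsp; split; [exact Fsp_LPD| split; [exact I|]].
    intros z Hz1 Hz2; destruct z; simpl in *; auto.
  - destruct c; simpl in Hdc; try contradiction; exfalso; auto.
  - exists (fun z => RP OZZ z Ee); split; [apply principal_LPD, meet_ok; exact I| split; auto using R_refl].
  - destruct c; simpl in Hdc; try contradiction; exfalso; auto.
  - exists (fun z => RP OZZ z (X i)); split; [apply principal_LPD, meet_ok; exact I| split; auto using R_refl].
  - exists (fun z => RP OZZ z (Y i)); split; [apply principal_LPD, meet_ok; exact I| split; auto using R_refl].
  - destruct c; simpl in Hdc; try contradiction; subst; exfalso; auto.
Qed.

Theorem theorem2 :
  ~ exists T : formula -> Prop,
      (forall phi, T phi -> sentence phi) /\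
      (forall (M : Type) (R : M -> M -> Prop),
          inhabited M -> (models R T <-> down_poset R)).
Proof.
  intros [T [Hs Hiff]].
  assert (M1 : models (RP OZZ) T) by (apply (Hiff _ _ (inhabits Bot)); apply down1).
  apply notdown2. apply (Hiff _ _ (inhabits Bot)).
  intros phi Hphi rho.
  apply (ef_sentence OZZ OZ phi (fun _ => Bot) rho (Hs phi Hphi)). apply M1; auto.
Qed.
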